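(* Let $n\ge 2$ and $q\in\{2,3\}$. Then ${\rm SL}(n,q)$ (which equals ${\rm GL}(n,2)$ when $q=2$) is generated by $x_{12}(1)=I+E_{12}$ and the $n\times n$ matrix $w$ with entry $1$ in position $(1,n)$, entry $-1$ in positions $(i+1,i)$ for $1\le i\le n-1$, and $0$ elsewhere.
   Context: $E_{ij}$ denotes the square matrix with $1$ in position $(i,j)$ and $0$ elsewhere; $x_{ij}(\alpha)=I+\alpha E_{ij}$ for $i\ne j$. *)

(* Defs.v *)
From HB Require Import structures.
From mathcomp Require Import all_boot all_order all_algebra all_fingroup.
Set Implicit Arguments. Unset Strict Implicit. Unset Printing Implicit Defensive.
Import GRing.Theory.
Local Open Scope ring_scope.

(* Indices are 0-based: the paper's position (i,j) is (i-1, j-1) here. *)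

Definition Emx (R : nzRingType) (m a b : nat) : 'M[R]_m :=
  \matrix_(i < m, j < m) (((i : nat) == a) && ((j : nat) == b))%:R.

Definition x12mx (R : nzRingType) (m : nat) : 'M[R]_m := 1%:M + Emx R m 0 1.

Definition wmx (R : nzRingType) (m : nat) : 'M[R]_m :=
  \matrix_(i < m, j < m)
    (if ((i : nat) == 0%N) && ((j : nat) == m.-1) then 1
     else if (i : nat) == j.+1 then -1 else 0).

(* Main.v *)
Require Import Defs.
From HB Require Import structures.
From mathcomp Require Import all_boot all_order all_algebra all_fingroup ring zify.
Import GRing.Theory.
Local Open Scope ring_scope.

Module Aux.
Set Implicit Arguments. Unset Strict Implicit. Unset Printing Implicit Defensive.
Section Gen.
Variable F : fieldType.
Variable m : nat.
Local Notation N := m.+1.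
Implicit Types (A B : 'M[F]_N).

Definition Tm (a b : 'I_N) (x : F) : 'M[F]_N := 1%:M + x *: delta_mx a b.

Lemma delta_mulE (a b : 'I_N) B i j :
  (delta_mx a b *m B) i j = (i == a)%:R * B b j.
Proof.
rewrite mxE (bigD1 b) //= big1 ?addr0; last first.
  by move=> k /negPf hk; rewrite mxE hk andbF mul0r.
by rewrite mxE eqxx andbT.
Qed.

Lemma mul_deltaE (a b : 'I_N) B i j :
  (B *m delta_mx a b) i j = B i a * (b == j)%:R.
Proof.
rewrite mxE (bigD1 a) //= big1 ?addr0; last first.
  by move=> k /negPf hk; rewrite mxE hk mulr0.
by rewrite mxE eqxx eq_sym.
Qed.

Lemma TmulE a b x B i j : (Tm a b x *m B) i j = B i j + (i == a)%:R * x * B b j.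
Proof.
rewrite mulmxDl mul1mx -scalemxAl mxE [X in _ + X]mxE delta_mulE.
by rewrite mulrA [x * _]mulrC.
Qed.

Lemma TT a b x y : a != b -> Tm a b x *m Tm a b y = Tm a b (x + y).
Proof.
move=> hab; rewrite /Tm mulmxDl mul1mx mulmxDr mulmx1 -!scalemxAl -!scalemxAr.
have hba : b != a by rewrite eq_sym.
rewrite mul_delta_mx_0 // !scaler0 addr0 scalerDl.
by rewrite -addrA; congr (_ + _); rewrite addrC.
Qed.

Lemma T0 a b : Tm a b 0 = 1%:M.
Proof. by rewrite /Tm scale0r addr0. Qed.

Lemma detT a b x : a != b -> \det (Tm a b x) = 1.
Proof.
move=> hab; case: (ltngtP a b) => hlt; last by move/val_inj: hlt => /eqP; rewrite (negPf hab).
- rewrite -det_tr det_trig; last first.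
    apply/is_trig_mxP => i j hij; rewrite !mxE.
    have -> : (j == a) && (i == b) = false.
      by apply/negP => /andP[/eqP hj /eqP hi]; move: hij; rewrite hj hi ltnNge ltnW.
    by rewrite -[j == i]val_eqE /= gtn_eqF // mulr0 addr0.
  apply: big1 => i _; rewrite !mxE eqxx.
  have -> : (i == a) && (i == b) = false.
    by apply/negP => /andP[/eqP -> /eqP h]; move: hab; rewrite h eqxx.
  by rewrite mulr0 addr0.
- rewrite det_trig; last first.
    apply/is_trig_mxP => i j hij; rewrite !mxE.
    have -> : (i == a) && (j == b) = false.
      by apply/negP => /andP[/eqP hj /eqP hi]; move: hij; rewrite hj hi ltnNge ltnW.
    by rewrite -[i == j]val_eqE /= ltn_eqF // mulr0 addr0.
  apply: big1 => i _; rewrite !mxE eqxx.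
  have -> : (i == a) && (i == b) = false.
    by apply/negP => /andP[/eqP -> /eqP h]; move: hab; rewrite h eqxx.
  by rewrite mulr0 addr0.
Qed.

Lemma Tinv a b x : a != b -> invmx (Tm a b x) = Tm a b (- x).
Proof.
move=> hab; have h1 : Tm a b x *m Tm a b (- x) = 1%:M by rewrite TT // subrr T0.
have [hu _] := mulmx1_unit h1.
by rewrite -[RHS](mulKmx hu) h1 mulmx1.
Qed.

Section Elim.
Variable P : 'M[F]_N -> Prop.
Hypothesis P1 : P 1%:M.
Hypothesis PT : forall a b x B, a != b -> P B -> P (Tm a b x *m B).

Definition rel A B := \det B = \det A /\ (P B -> P A).

Lemma rel_refl A : rel A A. Proof. by split. Qed.
Lemma rel_trans A B C : rel A B -> rel B C -> rel A C.
Proof. by move=> [h1 h2] [h3 h4]; split; [rewrite h3 | auto]. Qed.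
Lemma relT a b x B : a != b -> rel B (Tm a b x *m B).
Proof.
move=> hab; split; first by rewrite det_mulmx detT // mul1r.
move=> /(PT (- x) hab); rewrite mulmxA TT // addNr T0 mul1mx //.
Qed.

Definition idcols (k : nat) B := forall i j : 'I_N, (j < k)%N -> B i j = (i == j)%:R.

Lemma idcolsT k (a b : 'I_N) x B : (k <= b)%N -> idcols k B -> idcols k (Tm a b x *m B).
Proof.
move=> hkb hid i j hj; rewrite TmulE hid // (hid b j hj).
have -> : (b == j) = false by apply/negP => /eqP h; move: hj; rewrite -h ltnNge hkb.
by rewrite mulr0 addr0.
Qed.


Lemma pivot (k : 'I_N) B : idcols k B -> \det B != 0 ->
  exists2 p : 'I_N, (k <= p)%N & B p k != 0.
Proof.
move=> hid hdet.
have [p /andP[hp hBp] | hnone] := pickP [pred p : 'I_N | (k <= p)%N && (B p k != 0)].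
  by exists p.
exfalso.
have hz : forall p : 'I_N, (k <= p)%N -> B p k = 0.
  by move=> p hp; move: (hnone p) => /=; rewrite hp /= => /negbFE/eqP.
pose c : 'cV[F]_N := delta_mx k 0 - \sum_(l < N | (l < k)%N) B l k *: delta_mx l 0.
have Bc : B *m c = 0.
  rewrite mulmxBr mulmx_sumr -colE.
  have -> : \sum_(l < N | (l < k)%N) B *m (B l k *: (delta_mx l 0 : 'cV_N)) =
            \sum_(l < N | (l < k)%N) B l k *: (delta_mx l 0 : 'cV_N).
    apply: eq_bigr => l hl; rewrite -scalemxAr -colE; congr (_ *: _).
    apply/matrixP => i j; rewrite !mxE hid // ord1 eqxx andbT //.
  apply/eqP; rewrite subr_eq0; apply/eqP/matrixP => i j.
  rewrite summxE mxE ord1.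
  case: (ltnP i k) => hik.
    rewrite (bigD1 i) //= !mxE !eqxx /= mulr1 big1 ?addr0 //.
    by move=> l /andP[_ hl]; rewrite !mxE eq_sym (negPf hl) /= mulr0.
  rewrite hz // big1 // => l hl; rewrite !mxE.
  have -> : (i == l) = false.
    by apply/negP => /eqP hil; move: hl; rewrite -hil ltnNge hik.
  by rewrite mulr0.
have hu : B \in unitmx by rewrite unitmxE unitfE.
have c0 : c = 0 by rewrite -(mulKmx hu c) Bc mulmx0.
have : c k 0 = 1.
  rewrite mxE [X in _ + X]mxE summxE mxE !eqxx /= big1 ?subr0 // => l hl; rewrite !mxE.
  have -> : (k == l) = false.
    by apply/negP => /eqP hkl; move: hl; rewrite -hkl ltnn.
  by rewrite mulr0.
by rewrite c0 mxE => /esym/eqP; rewrite oner_eq0.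
Qed.


Lemma stepA (k : 'I_N) B : idcols k B -> \det B != 0 ->
  exists B1, [/\ rel B B1, idcols k B1 & B1 k k != 0].
Proof.
move=> hid hd; have [p hp hBp] := pivot hid hd.
have [hkk|hkk] := eqVneq (B k k) 0; last by exists B; split=> //; exact: rel_refl.
have hpk : k != p by apply/negP => /eqP e; move: hBp; rewrite -e hkk eqxx.
exists (Tm k p 1 *m B); split; [exact: relT | exact: idcolsT | ].
by rewrite TmulE hkk eqxx add0r !mul1r.
Qed.

Lemma clear (k : 'I_N) B : idcols k B -> B k k != 0 ->
  exists B3, [/\ rel B B3, idcols k B3, B3 k k = B k k &
    forall i : 'I_N, i != k -> B3 i k = 0].
Proof.
move=> hid hkk.
suff: forall t, (t <= N)%N -> exists B3, [/\ rel B B3, idcols k B3, B3 k k = B k k &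
    forall i : 'I_N, (i < t)%N -> i != k -> B3 i k = 0].
  by move=> /(_ N (leqnn N)) [B3 [h1 h2 h3 h4]]; exists B3; split=> // i; apply: h4.
elim=> [|t IH] ht.
  by exists B; split=> //; exact: rel_refl.
have [B3 [hr hid3 hkk3 hc]] := IH (ltnW ht).
pose i0 := Ordinal ht.
have hB3 : B3 k k != 0 by rewrite hkk3.
case: (eqVneq i0 k) => hi0.
  exists B3; split=> // i hi hik; rewrite ltnS leq_eqVlt in hi.
  case/orP: hi => [/eqP e|hi]; last exact: hc.
  have hii : i = i0 by apply: val_inj.
  by move: hik; rewrite hii hi0 eqxx.
exists (Tm i0 k (- (B3 i0 k / B3 k k)) *m B3); split.
- exact: rel_trans hr (relT _ _ hi0).
- exact: idcolsT (leqnn k) hid3.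
- by rewrite TmulE eq_sym (negPf hi0) mul0r mul0r addr0.
- move=> i hi hik; rewrite TmulE.
  case: (eqVneq i i0) => [->|hii0].
    by rewrite mul1r mulNr divfK // subrr.
  rewrite mul0r mul0r addr0 hc //.
  rewrite ltnS leq_eqVlt in hi; case/orP: hi => [/eqP e|//].
  have hii : i = i0 by apply: val_inj; rewrite /= e.
  by move: hii0; rewrite hii eqxx.
Qed.

Lemma norm (k : 'I_N) B (hk : (k.+1 < N)%N) : idcols k B -> B k k != 0 ->
  exists B2, [/\ rel B B2, idcols k B2 & B2 k k = 1].
Proof.
move=> hid hkk.
pose s := Ordinal hk.
have hsk : s != k by rewrite -val_eqE /= (gtn_eqF (ltnSn k)).
pose B1 := Tm s k ((1 - B s k) / B k k) *m B.
have hB1s : B1 s k = 1 by rewrite /B1 TmulE eqxx mul1r divfK // addrC subrK.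
have hB1k : B1 k k = B k k by rewrite /B1 TmulE eq_sym (negPf hsk) !mul0r addr0.
have hks : k != s by rewrite eq_sym.
exists (Tm k s (1 - B1 k k) *m B1); split.
- exact: rel_trans (relT _ _ hsk) (relT _ _ hks).
- apply: idcolsT; first exact: leqW.
  exact: idcolsT (leqnn k) hid.
- by rewrite TmulE eqxx mul1r hB1s mulr1 addrC subrK.
Qed.

Lemma step (k : 'I_N) B : idcols k B -> \det B = 1 ->
  exists B', rel B B' /\ idcols k.+1 B'.
Proof.
move=> hid hd.
have hd0 : \det B != 0 by rewrite hd oner_eq0.
have [B1 [r1 hid1 h1]] := stepA hid hd0.
have fin : forall B3, idcols k B3 -> B3 k k = 1 -> (forall i : 'I_N, i != k -> B3 i k = 0) ->
    idcols k.+1 B3.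
  move=> B3 hid3 h3 hc3 i j; rewrite ltnS leq_eqVlt => /orP[/eqP hj|hj]; last exact: hid3.
  have -> : j = k by apply: val_inj.
  case: (eqVneq i k) => [->|hik]; first by rewrite h3.
  by rewrite hc3.
case: (ltnP k.+1 N) => hk.
  have [B2 [r2 hid2 h2]] := norm hk hid1 h1.
  have h2' : B2 k k != 0 by rewrite h2 oner_eq0.
  have [B3 [r3 hid3 h3 hc3]] := clear hid2 h2'.
  exists B3; split; first exact: rel_trans r1 (rel_trans r2 r3).
  by apply: fin => //; rewrite h3.
have [B3 [r3 hid3 h3 hc3]] := clear hid1 h1.
exists B3; split; first exact: rel_trans r1 r3.
apply: fin => //.
have hkm : (k : nat) = m by apply/eqP; rewrite eqn_leq -ltnS ltn_ord /= -ltnS.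
have hdiag : B3 = diag_mx (\row_i (if i == k then B3 k k else 1)).
  apply/matrixP => i j; rewrite !mxE.
  case: (ltnP j k) => hj.
    rewrite hid3 //; case: (eqVneq i j) => [->|hij]; last by rewrite mulr0n.
    have -> : (j == k) = false by apply/negP => /eqP e; move: hj; rewrite e ltnn.
    by [].
  have -> : j = k by apply: val_inj; apply/eqP; rewrite /= eqn_leq hj andbT hkm -ltnS ltn_ord.
  case: (eqVneq i k) => [->|hik]; first by [].
  by rewrite hc3 // (negPf hik) mulr0n.
have : \det B3 = B3 k k.
  rewrite {1}hdiag det_diag (bigD1 k) //= mxE eqxx big1 ?mulr1 //.
  by move=> i hi; rewrite mxE (negPf hi).
by rewrite (proj1 r3) (proj1 r1) hd.
Qed.

Lemma elim A : \det A = 1 -> P A.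
Proof.
move=> hA.
suff: forall t, (t <= N)%N -> exists B, rel A B /\ idcols t B.
  move=> /(_ N (leqnn N)) [B [[hdB hPB] hid]]; apply: hPB.
  suff -> : B = 1%:M by [].
  by apply/matrixP => i j; rewrite hid // mxE.
elim=> [|t IH] ht.
  by exists A; split; [exact: rel_refl | move=> i j].
have [B [hr hid]] := IH (ltnW ht).
have hB1 : \det B = 1 by rewrite (proj1 hr) hA.
have [B' [hr' hid']] := step (k := Ordinal ht) hid hB1.
by exists B'; split; [exact: rel_trans hr hr' | exact: hid'].
Qed.

End Elim.
End Gen.
Section Gen2.
Variable F : fieldType.
Variable m : nat.
Hypothesis hm : (0 < m)%N.
Local Notation N := m.+1.
Local Notation W := (wmx F N).
Local Notation Tm := (@Tm F m).

Definition sc (i : 'I_N) : 'I_N := if (i : nat) == m then ord0 else inord i.+1.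
Definition sg (i : 'I_N) : F := if (i : nat) == m then 1 else -1.

Lemma sc_val i : sc i = (if (i : nat) == m then 0 else i.+1)%N :> nat.
Proof.
rewrite /sc; case: ifP => // him; rewrite inordK //.
by rewrite ltnS ltn_neqAle him -ltnS ltn_ord.
Qed.

Lemma sc_inj : injective sc.
Proof.
move=> a b h; have := congr1 (@nat_of_ord _) h; rewrite !sc_val.
case: ifP => ha; case: ifP => hb //.
- by move=> _; apply: val_inj; rewrite /= (eqP ha) (eqP hb).
- by case=> e; apply: val_inj.
Qed.

Lemma W_col (r i : 'I_N) : W r i = sg i * (r == sc i)%:R.
Proof.
rewrite /wmx mxE /sg -val_eqE /= sc_val.
case: (eqVneq (i : nat) m) => [->|him].
  rewrite andbT (ltn_eqF (ltn_ord r)) mul1r.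
  by case: (_ == _).
rewrite andbF.
by case: (_ == _); rewrite ?mulr1 ?mulr0.
Qed.

Lemma W_row (j c : 'I_N) : W (sc j) c = sg j * (c == j)%:R.
Proof.
rewrite /wmx mxE /sg -val_eqE /= sc_val.
case: (eqVneq (j : nat) m) => [->|hjm] /=.
  by rewrite mul1r; case: (_ == _).
rewrite eqSS eq_sym.
by case: (_ == _); rewrite ?mulr1 ?mulr0.
Qed.

Lemma Wconj i j x : W *m Tm i j x = Tm (sc i) (sc j) (sg i * sg j * x) *m W.
Proof.
apply/matrixP => r c; rewrite TmulE mulmxDr mulmx1 -scalemxAr mxE [X in _ + X]mxE.
rewrite mul_deltaE (W_col r i) W_row [(j == c)]eq_sym /sg.
by case: ((i : nat) == m); case: ((j : nat) == m); ring.
Qed.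

Lemma Tm_unit (a b : 'I_N) (x : F) : a != b -> Tm a b x \in unitmx.
Proof. by move=> hab; rewrite unitmxE detT // unitr1. Qed.

Lemma Tcomm (i j k : 'I_N) : i != j -> j != k -> i != k ->
  Tm i j 1 *m Tm j k 1 = Tm i k 1 *m (Tm j k 1 *m Tm i j 1).
Proof.
move=> hij hjk hik.
rewrite /Tm !scale1r !mulmxDl !mulmxDr !mul1mx !mulmx1 !mulmxA.
have hki : (k == i) = false by rewrite eq_sym (negPf hik).
have hkj : (k == j) = false by rewrite eq_sym (negPf hjk).
rewrite !mul_delta_mx_cond eqxx hki hkj !mulr0n mul0mx !mulr1n.
apply/matrixP => r c; rewrite !mxE; ring.
Qed.

Lemma detW : \det W = 1.
Proof.
rewrite (expand_det_col _ ord_max) (bigD1 ord0) //= big1 ?addr0; last first.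
  move=> i hi; rewrite W_col /sg /= eqxx mul1r.
  have -> : (i == sc ord_max) = false.
    by apply/negbTE; rewrite -val_eqE /= sc_val /= eqxx; rewrite -val_eqE in hi.
  by rewrite mul0r.
rewrite W_col /sg /= eqxx mul1r.
have -> : (ord0 == sc ord_max) by rewrite -val_eqE /= sc_val /= eqxx.
rewrite mul1r /cofactor.
have -> : row' ord0 (col' ord_max W) = (-1)%:M.
  apply/matrixP => i j; rewrite [LHS]mxE [LHS]mxE [RHS]mxE W_col /sg lift_max (ltn_eqF (ltn_ord j)).
  have -> : (lift ord0 i == sc (lift ord_max j)) = (i == j).
    rewrite -val_eqE /= sc_val lift_max (ltn_eqF (ltn_ord j)).
    by [].
  by case: (i == j); rewrite ?mulr1 ?mulr0 ?mulr1n ?mulr0n.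
by rewrite det_scalar add0n -expr2 sqrr_sign.
Qed.

Section Gen.
Variable Q : 'M[F]_N -> Prop.
Hypothesis Qmul : forall A B, Q A -> Q B -> Q (A *m B).
Hypothesis Qinv : forall A, Q A -> Q (invmx A).
Hypothesis QW : Q W.
Hypothesis Wu : W \in unitmx.
Hypothesis QX : Q (Tm ord0 (inord 1) 1).

Lemma Qsgn a b (e : F) : a != b -> (e = 1 \/ e = -1) -> Q (Tm a b e) -> Q (Tm a b 1).
Proof.
move=> hab [->|->] //; move=> /Qinv; rewrite Tinv // opprK //.
Qed.

Lemma Qshift a b : a != b -> Q (Tm a b 1) -> Q (Tm (sc a) (sc b) 1).
Proof.
move=> hab hQ.
have hab' : sc a != sc b by apply: contra hab => /eqP /sc_inj ->.
apply: (Qsgn (e := sg a * sg b)) => //.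
  by rewrite /sg; case: ifP => _; case: ifP => _; rewrite ?mul1r ?mulr1 ?mulrNN ?mulr1; auto.
have := Wconj a b 1; rewrite mulr1 => h.
have -> : Tm (sc a) (sc b) (sg a * sg b) = W *m Tm a b 1 *m invmx W by rewrite h mulmxK.
by apply: Qmul; [apply: Qmul | apply: Qinv].
Qed.

Lemma Qcomm (i j k : 'I_N) : i != j -> j != k -> i != k ->
  Q (Tm i j 1) -> Q (Tm j k 1) -> Q (Tm i k 1).
Proof.
move=> hij hjk hik h1 h2.
have hu : Tm j k 1 *m Tm i j 1 \in unitmx by rewrite unitmx_mul !Tm_unit.
have -> : Tm i k 1 = (Tm i j 1 *m Tm j k 1) *m invmx (Tm j k 1 *m Tm i j 1).
  by rewrite Tcomm // mulmxK.
by apply: Qmul; [apply: Qmul | apply: Qinv; apply: Qmul].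
Qed.

Definition good (i j : nat) := Q (Tm (inord i : 'I_N) (inord j) 1).

Lemma inord_neq (i j : nat) : (i <= m)%N -> (j <= m)%N -> i != j ->
  (inord i : 'I_N) != inord j.
Proof. by move=> hi hj hij; rewrite -val_eqE /= !inordK. Qed.

Lemma good_comm i j k : (i <= m)%N -> (j <= m)%N -> (k <= m)%N ->
  i != j -> j != k -> i != k -> good i j -> good j k -> good i k.
Proof. by move=> hi hj hk hij hjk hik; apply: Qcomm; apply: inord_neq. Qed.

Lemma chain t : (t < m)%N -> good t t.+1.
Proof.
elim: t => [|t IH] ht.
  rewrite /good; have -> : (inord 0 : 'I_N) = ord0 by apply: val_inj; rewrite /= inordK.
  exact: QX.
have /Qshift : good t t.+1 by apply: IH; apply: ltnW.
have hsc : forall s, (s < m)%N -> sc (inord s) = inord s.+1.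
  move=> s hs; apply: val_inj; rewrite /= sc_val !inordK ?(ltn_eqF hs) ?(ltnW hs) //; exact: ltnW.
rewrite !hsc //; last by apply: ltnW.
apply; apply: inord_neq; rewrite ?(ltnW (ltnW ht)) ?(ltnW ht) //.
by rewrite neq_ltn ltnSn.
Qed.

Lemma wrap : good m 0.
Proof.
have hm1 : (m.-1 < m)%N by rewrite prednK.
have h : good m.-1 m by have := chain hm1; rewrite prednK.
move: h => /Qshift.
have -> : sc (inord m.-1) = inord m.
  apply: val_inj; rewrite /= sc_val !inordK ?(ltn_eqF hm1) ?prednK //.
have -> : sc (inord m) = inord 0.
  by apply: val_inj; rewrite /= sc_val !inordK // eqxx.
apply; apply: inord_neq => //; first exact: ltnW.
by rewrite neq_ltn hm1.
Qed.

Lemma upper d i : (0 < d)%N -> (i + d <= m)%N -> good i (i + d).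
Proof.
elim: d => [//|d IH] _ hid.
case: (posnP d) => hd.
  by move: hid; rewrite hd addn1 => hid; apply: chain.
rewrite addnS; apply: (@good_comm i (i + d) (i + d).+1).
- by apply: leq_trans hid; apply: leq_addr.
- by apply: leq_trans hid; rewrite leq_add2l.
- by rewrite -addnS.
- lia.
- lia.
- lia.
- by apply: IH => //; apply: leq_trans hid; rewrite leq_add2l.
- by apply: chain; rewrite -addnS.
Qed.

Lemma upper' i j : (i < j)%N -> (j <= m)%N -> good i j.
Proof.
move=> hij hj; have -> : j = (i + (j - i))%N by lia.
apply: upper; lia.
Qed.

Lemma col0 i : (0 < i)%N -> (i <= m)%N -> good i 0.
Proof.
move=> hi him; case: (ltnP i m) => h; last first.
  have -> : i = m by lia.
  exact: wrap.
apply: (@good_comm i m 0) => //; try lia.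
- exact: upper'.
- exact: wrap.
Qed.

Lemma all_good i j : (i <= m)%N -> (j <= m)%N -> i != j -> good i j.
Proof.
move=> hi hj hij; case: (ltngtP i j) => h; last by rewrite h eqxx in hij.
  exact: upper'.
case: (posnP j) => hj0; first by rewrite hj0; apply: col0 => //; lia.
apply: (@good_comm i 0 j) => //; try lia.
- by apply: col0 => //; lia.
- exact: upper'.
Qed.

Lemma allT (a b : 'I_N) : a != b -> Q (Tm a b 1).
Proof.
move=> hab; rewrite -(inord_val a) -(inord_val b); apply: all_good.
- by rewrite -ltnS.
- by rewrite -ltnS.
- exact: hab.
Qed.

End Gen.
End Gen2.
Lemma x12E (F : fieldType) m : (0 < m)%N ->
  x12mx F m.+1 = Tm (ord0 : 'I_m.+1) (inord 1) 1.
Proof.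
move=> hm; rewrite /x12mx /Tm scale1r; congr (_ + _).
apply/matrixP => i j; rewrite !mxE.
by rewrite -[j == inord 1]val_eqE /= inordK.
Qed.
End Aux.
Import Aux.
Unset Implicit Arguments. Set Strict Implicit.
Theorem mainTheorem3 (n q : nat) (hn : (2 <= n)%N) (hq : (q == 2%N) || (q == 3%N))
  (a b : {'GL_n(q)}) :
  GLval a = x12mx 'F_q n.-1.+1 ->
  GLval b = wmx 'F_q n.-1.+1 ->
  <<[set a; b]%g>>%g = [set g : {'GL_n(q)} | \det (GLval g) == 1%R].
Proof.
move=> ha hb.
set m := n.-1 in ha hb *.
have hm : (0 < m)%N by rewrite /m; lia.
have h01 : (ord0 : 'I_m.+1) != inord 1 by rewrite -val_eqE /= inordK.
set S := [set g : {'GL_n(q)} | \det (GLval g) == 1%R].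
have hS : group_set S.
  apply/group_setP; split; first by rewrite inE GL_1E det1.
  by move=> x y; rewrite !inE GL_MxE det_mulmx => /eqP -> /eqP ->; rewrite mulr1.
apply/eqP; rewrite eqEsubset; apply/andP; split.
  have -> : S = Group hS by [].
  rewrite gen_subG; apply/subsetP => g; rewrite !inE => /orP[] /eqP ->.
    by rewrite ha x12E // detT.
  by rewrite hb detW.
apply/subsetP => g; rewrite inE => /eqP hg.
pose P := fun M : 'M['F_q]_m.+1 => exists2 h, h \in <<[set a; b]>>%g & GLval h = M.
have Pmul : forall A B, P A -> P B -> P (A *m B).
  move=> A B [h1 hh1 <-] [h2 hh2 <-]; exists (h1 * h2)%g; first exact: groupM.
  by rewrite GL_MxE.
have Pinv : forall A, P A -> P (invmx A).
  move=> A [h hh <-]; exists (h^-1)%g; first by rewrite groupV.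
  by rewrite GL_VxE.
have PW : P (wmx 'F_q m.+1) by exists b; [apply: mem_gen; exact: set22 | ].
have Wu : wmx 'F_q m.+1 \in unitmx by rewrite -hb; exact: GL_unitmx.
have PX : P (Tm (ord0 : 'I_m.+1) (inord 1) 1).
  by exists a; [apply: mem_gen; exact: set21 | rewrite ha x12E].
have PT1 := allT hm Pmul Pinv PW Wu PX.
have PTk : forall (u v : 'I_m.+1) k, u != v -> P (Tm u v (k%:R)).
  move=> u v k huv; elim: k => [|k IH].
    by rewrite T0; exists 1%g; [exact: group1 | rewrite GL_1E].
  by rewrite -addn1 natrD -TT //; apply: Pmul => //; apply: PT1.
have : P (GLval g).
  apply: elim hg.
    by exists 1%g; [exact: group1 | rewrite GL_1E].
  move=> u v x B huv hB; apply: Pmul => //.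
  by rewrite -(natr_Zp x); apply: PTk.
by case=> h hh /val_inj <-.
Qed.
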